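(* Let $x_0\in X$ be a regular point. Define $\Phi:\Omega_{x_0}\to\partial\mathcal T(x_0)$ by sending $(x_0,x_1,x_2,\dots)\in\Omega_{x_0}$ to the equivalence class in $\partial\mathcal T(x_0)$ of the sequence $\{x_n\}_{n\ge0}$. Then $\Phi$ is well defined and is a bijective homeomorphism of $\Omega_{x_0}$ onto $\partial\mathcal T(x_0)$. Moreover, for $x\in\mathcal T(x_0)$ and $(x_0,x_1,\dots)\in\Omega_{x_0}$, $$K(x,\Phi(x_0,x_1,\dots))=\begin{cases}\dfrac{1}{W(x_1)W(x_2)\cdots W(x_n)}, & \text{if } x=x_n \text{ for some } n\ge0,\\ 0,&\text{otherwise,}\end{cases}$$ where for $n=0$ the empty product is $1$.
   Context: $X$ is a compact metric space, $r:X\to X$ a finite-to-one, onto, Borel map, $m_0$ a Borel function with $\frac{1}{\#r^{-1}(x)}\sum_{r(y)=x}|m_0(y)|^2=1$, and $W(x)=|m_0(x)|^2/\#r^{-1}(r(x))$. A point $x_0$ is regular if the sets $r^{-n}(x_0)$, $n\in\mathbb N$, are mutually disjoint and no $r^{-n}(x_0)$, $n\ge0$, meets the zero set of $W$. $\mathcal T(x_0)=\bigcup_{n\ge0}r^{-n}(x_0)$; $n(x)$ is the unique $n\ge0$ with $r^n(x)=x_0$; for $x\in\mathcal T(x_0)$, $\mathcal T(x)=\bigcup_{n\ge0}r^{-n}(x)$. $\Omega_{x_0}=\{(x_0,x_1,\dots): r(x_{n+1})=x_n\ \forall n\ge0\}$ with the topology whose basic open sets are the cylinders $V_{x_0,\dots,x_n}=\{(z_k)\in\Omega_{x_0}: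 z_0=x_0,\dots,z_n=x_n\}$. Transition probabilities $p(x,y)=W(y)$ if $r(y)=x$ and $0$ otherwise, $p_n$ its $n$-th matrix power, Green function $g(x,y)=\sum_{n\ge0}p_n(x,y)$, Martin kernel $K(x,y)=g(x,y)/g(x_0,y)$ for $x,y\in\mathcal T(x_0)$. Let $C_x=1/(W(x)W(r(x))\cdots W(r^{n(x)-1}(x)))$ (so $0\le K(x,\cdot)\le C_x$). Fix $D:\mathcal T(x_0)\to(0,\infty)$ with $\sum_qD(q)<\infty$ and define the metric $\rho(x,y)=\sum_{q\in\mathcal T(x_0)}D(q)\frac{|K(q,x)-K(q,y)|+|\delta_{qx}-\delta_{qy}|}{C_q+1}$ on $\mathcal T(x_0)$. The Martin compactification $\widehat{\mathcal T}(x_0)$ is the completion of $(\mathcal T(x_0),\rho)$ and the Martin boundary is $\partial\mathcal T(x_0)=\widehat{\mathcal T}(x_0)\setminus\mathcal T(x_0)$; its points are equivalence classes of $\rho$-Cauchy sequences $\{y_n\}$ that eventually leave every finite set and for which $\lim_nK(x,y_n)$ exists for all $x\in\mathcal T(x_0)$. Each $K(x,\cdot)$ extends uniquely continuously to $\widehat{\mathcal T}(x_0)$, denoted again $K(x,\cdot)$. *)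

(* Defs.v *)
From HB Require Import structures.
From mathcomp Require Import all_boot all_order all_algebra.
From mathcomp Require Import complex finmap.
From mathcomp Require Import all_classical all_reals all_analysis.

Set Implicit Arguments.
Unset Strict Implicit.
Unset Printing Implicit Defensive.

Import Order.TTheory GRing.Theory Num.Theory.
Import numFieldNormedType.Exports.

Local Open Scope classical_set_scope.
Local Open Scope ring_scope.

Definition borel_set (T : topologicalType) (A : set T) : Prop := <<s open >> A.

Definition borel_fun (T U : topologicalType) (f : T -> U) : Prop :=
  forall B : set U, borel_set B -> borel_set (f @^-1` B).

Section Martin.
Variables (R : realType) (X : metricType R).
Variables (r : X -> X) (m0 : X -> R[i]) (x0 : X) (D : X -> R).

Definition sqnorm (z : R[i]) : R := (complex.Re z) ^+ 2 + (complex.Im z) ^+ 2.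

Definition npre (x : X) : nat := #|` fset_set (r @^-1` [set x])|.

Definition W (x : X) : R := sqnorm (m0 x) / (npre (r x))%:R.

Definition preim_n (n : nat) : set X := [set y | iter n r y = x0].

Definition regular : Prop :=
  (forall n m : nat, n <> m -> preim_n n `&` preim_n m = set0) /\
  (forall (n : nat) (y : X), preim_n n y -> W y != 0).

Definition tree : set X := [set y | exists n : nat, iter n r y = x0].

(* n(x): the (unique, for regular x0) n >= 0 with r^n(x) = x0 *)
Definition nlev (x : X) : nat := xget 0%N [set n | iter n r x = x0].

Definition Ccoef (x : X) : R := (\prod_(i < nlev x) W (iter i r x))^-1.

Definition pmat (x y : X) : R := if r y == x then W y else 0.

(* n-th matrix power of p, the matrix being indexed by T(x0) *)
Fixpoint pn (n : nat) (x y : X) : \bar R :=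
  match n with
  | 0 => ((x == y)%:R)%:E
  | n'.+1 => \esum_(z in tree) (pn n' x z * (pmat z y)%:E)%E
  end.

Definition green (x y : X) : \bar R := (\sum_(0 <= n <oo) pn n x y)%E.

Definition martinK (x y : X) : R := fine (green x y) / fine (green x0 y).

Definition kron (x y : X) : R := (x == y)%:R.

Definition rho (x y : X) : R :=
  fine (\esum_(q in tree)
    ((D q * (`|martinK q x - martinK q y| + `|kron q x - kron q y|)
        / (Ccoef q + 1))%:E))%E.

(* sequences in T(x0) representing points of the Martin boundary *)
Definition bdry_seq (y : nat -> X) : Prop :=
  [/\ (forall n, tree (y n)),
      (forall e : R, 0 < e -> exists N : nat,
          forall m n, (N <= m)%N -> (N <= n)%N -> rho (y m) (y n) < e),
      (forall F : set X, finite_set F ->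
          exists N : nat, forall n, (N <= n)%N -> ~ F (y n)) &
      (forall x, tree x -> exists l : R, (fun n => martinK x (y n)) @ \oo --> l)].

Definition bequiv (y z : nat -> X) : Prop :=
  (fun n => rho (y n) (z n)) @ \oo --> (0 : R).

Definition bclass (y : nat -> X) : set (nat -> X) :=
  [set z | bdry_seq z /\ bequiv y z].

(* Martin boundary: the set of equivalence classes *)
Definition boundary : set (set (nat -> X)) :=
  [set c | exists y, bdry_seq y /\ c = bclass y].

Definition rep (c : set (nat -> X)) : nat -> X := xget (fun _ => x0) c.

Definition bdist (c c' : set (nat -> X)) : R :=
  lim ((fun n => rho (rep c n) (rep c' n)) @ \oo).

Definition boundary_open (B : set (set (nat -> X))) : Prop :=
  B `<=` boundary /\
  forall c, B c -> exists e : R, 0 < e /\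
     forall c', boundary c' -> bdist c c' < e -> B c'.

Definition martinKb (x : X) (c : set (nat -> X)) : R :=
  lim ((fun n => martinK x (rep c n)) @ \oo).

Definition Omega : set (nat -> X) :=
  [set w | w 0%N = x0 /\ forall n, r (w n.+1) = w n].

Definition cyl (s : nat -> X) (n : nat) : set (nat -> X) :=
  [set w | Omega w /\ forall k, (k <= n)%N -> w k = s k].

Definition Omega_open (U : set (nat -> X)) : Prop :=
  U `<=` Omega /\
  forall w, U w -> exists (s : nat -> X) (n : nat), cyl s n w /\ cyl s n `<=` U.

Definition Phi (w : nat -> X) : set (nat -> X) := bclass w.

End Martin.

(* Main.v *)
Require Import Defs.
From HB Require Import structures.
From mathcomp Require Import all_boot all_order all_algebra.
From mathcomp Require Import complex finmap.
From mathcomp Require Import all_classical all_reals all_analysis.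
From mathcomp Require Import ring lra.

Import Order.TTheory GRing.Theory Num.Theory.
Import numFieldNormedType.Exports.

Local Open Scope classical_set_scope.
Local Open Scope ring_scope.

Set Implicit Arguments.
Unset Strict Implicit.
Unset Printing Implicit Defensive.

Section Main.
Variables (R : realType) (X : metricType R) (r : X -> X) (m0 : X -> R[i]) (x0 : X) (D : X -> R).
Hypothesis finpre : forall x : X, finite_set (r @^-1` [set x]).
Hypothesis reg : regular r m0 x0.
Hypothesis Dpos : forall q, tree r x0 q -> 0 < D q.
Hypothesis Dsum : (\esum_(q in tree r x0) (D q)%:E < +oo)%E.

Local Notation T := (tree r x0).
Local Notation lev := (nlev r x0).
Local Notation K := (martinK r m0 x0).
Local Notation C := (Ccoef r m0 x0).
Local Notation W := (W r m0).

Lemma treeI y n : iter n r y = x0 -> T y.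
Proof. by move=> h; exists n. Qed.

Lemma lev_uniq y n m : iter n r y = x0 -> iter m r y = x0 -> n = m.
Proof.
move=> hn hm; apply/eqP; apply: contraT => /eqP nm.
have h := reg.1 n m nm.
have : (preim_n r x0 n `&` preim_n r x0 m) y by [].
by rewrite h.
Qed.

Lemma lev_spec y : T y -> iter (lev y) r y = x0.
Proof. by move=> [n hn]; apply: (@xgetI _ 0%N [set n | iter n r y = x0] n hn). Qed.

Lemma lev_eq y n : iter n r y = x0 -> lev y = n.
Proof. move=> hn; have hy := treeI hn.
exact: lev_uniq (lev_spec hy) hn. Qed.

Lemma anc_lev y q j : iter j r y = q -> T q -> T y /\ lev y = (lev q + j)%N.
Proof.
move=> hj hq; have e : iter (lev q + j) r y = x0 by rewrite iterD hj lev_spec.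
split; last exact: lev_eq e.
exact: treeI e.
Qed.

Lemma iter_tree y j : T y -> (j <= lev y)%N -> T (iter j r y) /\ lev (iter j r y) = (lev y - j)%N.
Proof.
move=> hy hj; have e : iter (lev y - j) r (iter j r y) = x0.
  by rewrite -iterD subnK // lev_spec.
split; last exact: lev_eq e.
exact: treeI e.
Qed.

Lemma W_ge0 y : 0 <= W y.
Proof. by rewrite /Defs.W divr_ge0 // /sqnorm addr_ge0 // sqr_ge0. Qed.

Lemma W_gt0 y : T y -> 0 < W y.
Proof.
move=> hy; rewrite lt_def W_ge0 andbT; apply: (reg.2 (lev y)).
exact: lev_spec.
Qed.

Definition P n y := \prod_(i < n) W (iter i r y).

Lemma P_ge0 n y : 0 <= P n y.
Proof. by apply: prodr_ge0 => i _; exact: W_ge0. Qed.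

Lemma P_gt0 n y : T y -> (n <= lev y)%N -> 0 < P n y.
Proof.
move=> hy hn; apply: prodr_gt0 => i _; apply: W_gt0.
by apply: (iter_tree hy _).1; apply: leq_trans (ltnW (ltn_ord i)) hn.
Qed.

Lemma C_gt0 q : T q -> 0 < C q.
Proof. by move=> hq; rewrite /Ccoef invr_gt0; exact: P_gt0. Qed.


Lemma pnE n x y : T x ->
  pn r m0 x0 n x y = ((iter n r y == x)%:R * P n y)%:E.
Proof.
move=> hx; elim: n y => [|n IH] y /=.
  by rewrite /P big_ord0 mulr1 eq_sym.
have h0 z : T z -> (0 <= pn r m0 x0 n x z * (pmat r m0 z y)%:E)%E.
  move=> _; rewrite IH -EFinM lee_fin; apply: mulr_ge0; first exact: mulr_ge0 (ler0n _ _) (P_ge0 _ _).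
  by rewrite /pmat; case: ifP => _ //; exact: W_ge0.
have Pn : P n.+1 y = W y * P n (r y).
  by rewrite /P big_ord_recl /=; congr (_ * _); apply: eq_bigr => i _; rewrite add0n -iterS iterSr.
case: (pselect (T (r y))) => hry.
  rewrite (esumID [set r y]) //.
  rewrite setIidr; last by move=> z ->.
  rewrite esum_set1; last exact: h0.
  rewrite esum1 ?adde0; last first.
    move=> z [_ /= hz]; rewrite /pmat ifN ?mule0 //; apply/eqP => e; apply: hz; by rewrite e.
  rewrite IH /pmat eqxx -EFinM Pn -iterS iterSr; congr (_%:E).
  by rewrite -mulrA [W y * _]mulrC.
rewrite esum1; last first.
  move=> z hz; rewrite /pmat ifN ?mule0 //; apply/eqP => e; apply: hry; by rewrite e.
suff /negPf -> : r (iter n r y) != x by rewrite mul0r.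
apply/eqP => e; apply: hry.
apply: (treeI (n := (lev x + n)%N)); by rewrite iterD -iterSr iterS e lev_spec.
Qed.

Lemma iter_uniq x y j k : T x -> iter j r y = x -> iter k r y = x -> j = k.
Proof.
move=> hx hj hk; have := lev_uniq (y := y) (n := (lev x + j)%N) (m := (lev x + k)%N).
rewrite !iterD hj hk lev_spec // => /(_ erefl erefl) /eqP.
by rewrite eqn_add2l => /eqP.
Qed.

Lemma greenE x y j : T x -> iter j r y = x -> green r m0 x0 x y = (P j y)%:E.
Proof.
move=> hx hj; rewrite /green (nneseries_split _ j.+1); last first.
  by move=> k _; rewrite pnE // lee_fin mulr_ge0 // P_ge0.
rewrite add0n eseries0 ?adde0; last first.
  move=> i hi _; rewrite pnE //; suff /negPf -> : iter i r y != x by rewrite mul0r.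
apply/eqP => e.
  by move: hi; rewrite (iter_uniq hx e hj) ltnn.
rewrite big_nat_recr //= big_nat_cond big1 ?add0e; first by rewrite pnE // hj eqxx mul1r.
move=> i /andP[/andP[_ hi] _]; rewrite pnE //; suff /negPf -> : iter i r y != x by rewrite mul0r.
apply/eqP => e.
by move: hi; rewrite (iter_uniq hx e hj) ltnn.
Qed.

Lemma green0 x y : T x -> (forall j, iter j r y <> x) -> green r m0 x0 x y = 0%E.
Proof.
move=> hx hj; rewrite /green eseries0 // => i _ _.
rewrite pnE //; suff /negPf -> : iter i r y != x by rewrite mul0r.
apply/eqP; exact: hj.
Qed.

Definition anc q y := exists j, iter j r y = q.

Lemma KE1 q y : T q -> T y -> anc q y -> K q y = C q.
Proof.
move=> hq hy [j hj]; rewrite /martinK (greenE hq hj) (greenE (treeI (n:=0%N) erefl) (lev_spec hy)) /=.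
have [_ ly] := anc_lev hj hq.
rewrite ly addnC /P big_split_ord /=.
have -> : \prod_(i < lev q) W (iter (j + i) r y) = \prod_(i < lev q) W (iter i r q).
  by apply: eq_bigr => i _; rewrite addnC iterD hj.
rewrite invfM mulrA mulfV ?mul1r //.
apply/lt0r_neq0; apply: (P_gt0 hy); rewrite ly; exact: leq_addl.
Qed.

Lemma KE0 q y : T q -> ~ anc q y -> K q y = 0.
Proof.
move=> hq na; rewrite /martinK green0 ?mul0r //.
by move=> j hj; apply: na; exists j.
Qed.

Definition term (q x y : X) := D q * (`|K q x - K q y| + `|kron q x - kron q y|) / (C q + 1).
Local Notation rho := (rho r m0 x0 D).

Lemma rhoE x y : rho x y = fine (\esum_(q in T) (term q x y)%:E).
Proof. by []. Qed.

Lemma K01 q y : T q -> T y -> K q y = C q \/ K q y = 0.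
Proof.
move=> hq hy; case: (pselect (anc q y)) => h; [left; exact: KE1|right; exact: KE0].
Qed.

Lemma Kdist_le q x y : T q -> T x -> T y -> `|K q x - K q y| <= C q.
Proof.
move=> hq hx hy; have c0 := C_gt0 hq.
by case: (K01 hq hx) => ->; case: (K01 hq hy) => ->;
  rewrite ?subrr ?normr0 ?subr0 ?sub0r ?normrN ?gtr0_norm // ltW.
Qed.

Lemma kron_le (q x y : X) : `|kron q x - kron q y| <= 1.
Proof. by rewrite /kron; case: (q == x); case: (q == y); rewrite ?subrr ?normr0 ?subr0 ?sub0r ?normrN ?normr1. Qed.

Lemma term_ge0 q x y : T q -> 0 <= term q x y.
Proof.
move=> hq; rewrite /term divr_ge0 ?mulr_ge0 ?addr_ge0 //; first exact: ltW (Dpos hq).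
exact: ltW (C_gt0 hq).
Qed.

Lemma term_le q x y : T q -> T x -> T y -> term q x y <= D q.
Proof.
move=> hq hx hy; have c0 := C_gt0 hq.
rewrite /term ler_pdivrMr ?addr_gt0 //; apply: ler_wpM2l; first exact: ltW (Dpos hq).
by apply: lerD; [exact: Kdist_le|exact: kron_le].
Qed.

Lemma esum_term_fin x y : T x -> T y -> \esum_(q in T) (term q x y)%:E \is a fin_num.
Proof.
move=> hx hy; rewrite ge0_fin_numE; last by apply: esum_ge0 => q hq; rewrite lee_fin term_ge0.
apply: le_lt_trans Dsum; apply: le_esum => q hq; rewrite lee_fin; exact: term_le.
Qed.

Lemma rhoEE x y : T x -> T y -> (rho x y)%:E = \esum_(q in T) (term q x y)%:E.
Proof. by move=> hx hy; rewrite rhoE fineK // esum_term_fin. Qed.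

Lemma rho_ge_term q x y : T q -> T x -> T y -> term q x y <= rho x y.
Proof.
move=> hq hx hy; rewrite -lee_fin rhoEE //; apply: esum_ge; exists [set q].
  by split; [exact: finite_set1|move=> z ->].
by rewrite fsbig_set1.
Qed.

Lemma rho_ge0 x y : 0 <= rho x y.
Proof. by rewrite rhoE fine_ge0 // esum_ge0 // => q hq; rewrite lee_fin term_ge0. Qed.

Lemma rho_le_esum (g : X -> R) x y : T x -> T y ->
  (forall q, T q -> term q x y <= g q) ->
  ((rho x y)%:E <= \esum_(q in T) (g q)%:E)%E.
Proof. by move=> hx hy hg; rewrite rhoEE //; apply: le_esum => q hq; rewrite lee_fin hg. Qed.

Lemma rho_sym x y : rho x y = rho y x.
Proof. by rewrite !rhoE; congr fine; apply: eq_esum => q _; rewrite /term (distrC (K q x)) (distrC (kron q x)). Qed.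

Lemma rho_xx x : rho x x = 0.
Proof. by rewrite rhoE esum1 // => q _; rewrite /term !subrr normr0 addr0 mulr0 mul0r. Qed.

Lemma rho_tri x y z : T x -> T y -> T z -> rho x z <= rho x y + rho y z.
Proof.
move=> hx hy hz; rewrite -lee_fin EFinD !rhoEE // -esumD; last 2 first.
- by move=> q hq; rewrite lee_fin term_ge0.
- by move=> q hq; rewrite lee_fin term_ge0.
apply: le_esum => q hq; have c0 := C_gt0 hq.
rewrite -EFinD lee_fin /term -mulrDl ler_pM2r ?invr_gt0 ?addr_gt0 //.
rewrite -mulrDr; apply: ler_wpM2l; first exact: ltW (Dpos hq).
rewrite addrACA; apply: lerD; exact: ler_distD.
Qed.

Definition eps q := D q * C q / (C q + 1).

Lemma eps_gt0 q : T q -> 0 < eps q.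
Proof. by move=> hq; have c0 := C_gt0 hq; rewrite /eps divr_gt0 ?mulr_gt0 ?addr_gt0 ?Dpos. Qed.

Lemma rho_sep q x y : T q -> T x -> T y -> K q x != K q y -> eps q <= rho x y.
Proof.
move=> hq hx hy hK; apply: le_trans (rho_ge_term hq hx hy).
have c0 := C_gt0 hq.
rewrite /eps /term ler_pM2r ?invr_gt0 ?addr_gt0 // ler_pM2l ?Dpos //.
have -> : `|K q x - K q y| = C q.
  move: hK; by case: (K01 hq hx) => ->; case: (K01 hq hy) => ->;
    rewrite ?eqxx // ?subr0 ?sub0r ?normrN ?gtr0_norm.
by rewrite lerDl.
Qed.

Local Notation Om := (Omega r x0).

Lemma path_iter w j n : Om w -> iter j r (w (j + n)%N) = w n.
Proof.
move=> [_ hw]; elim: j => [|j IH] //.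
by rewrite iterSr addSn hw.
Qed.

Lemma path_tree w n : Om w -> T (w n) /\ lev (w n) = n.
Proof.
move=> hw; have e : iter n r (w n) = x0 by rewrite -[in w n](addn0 n) path_iter //; case: hw.
by split; [exact: treeI e|exact: lev_eq e].
Qed.

Lemma path_low w k n : Om w -> (k <= n)%N -> w k = iter (n - k) r (w n).
Proof. by move=> hw hk; rewrite -{2}(subnK hk) path_iter. Qed.

Lemma path_anc w q m : Om w -> T q ->
  (anc q (w m) <-> (lev q <= m)%N /\ q = w (lev q)).
Proof.
move=> hw hq; split.
  move=> [j hj]; have [_ e] := anc_lev hj hq.
  rewrite (path_tree m hw).2 in e.
  split; first by rewrite e leq_addr.
  by rewrite -{1}hj e [(lev q + j)%N]addnC path_iter.
move=> [hl ->]; exists (m - lev q)%N; by rewrite -path_low.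
Qed.

Lemma path_K w q m : Om w -> T q ->
  K q (w m) = if (lev q <= m)%N && (q == w (lev q)) then C q else 0.
Proof.
move=> hw hq; case: ifP => [/andP[h1 /eqP h2]|h].
  by apply: KE1 => //; [exact: (path_tree m hw).1|apply/path_anc].
apply: KE0 => // /(path_anc m hw hq) [h1 h2]; by move: h; rewrite h1 -h2 eqxx.
Qed.

Lemma path_inj w n m : Om w -> w n = w m -> n = m.
Proof. by move=> hw e; rewrite -(path_tree n hw).2 e (path_tree m hw).2. Qed.

Lemma fin_bound (F : set X) (f : X -> nat) : finite_set F ->
  exists N, forall q, F q -> (f q <= N)%N.
Proof.
move=> fF; exists (\max_(q <- fset_set F) f q) => q Fq.
by apply: (@leq_bigmax_seq _ _ xpredT) => //; rewrite in_fset_set // mem_set.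
Qed.

Lemma D0E q : T q -> (0 <= (D q)%:E)%E.
Proof. by move=> hq; rewrite lee_fin; exact: ltW (Dpos hq). Qed.

Definition dtail N q := if (N <= lev q)%N then D q else 0.

Lemma dtail_ge0 N q : T q -> 0 <= dtail N q.
Proof. by move=> hq; rewrite /dtail; case: ifP => // _; exact: ltW (Dpos hq). Qed.

Lemma tail_mono N M : (N <= M)%N ->
  (\esum_(q in T) (dtail M q)%:E <= \esum_(q in T) (dtail N q)%:E)%E.
Proof.
move=> hNM; apply: le_esum => q hq; rewrite lee_fin /dtail.
case: ifP => h1; first by rewrite (leq_trans hNM h1).
by case: ifP => // _; exact: ltW (Dpos hq).
Qed.

Lemma tail_small e : 0 < e -> exists N, (\esum_(q in T) (dtail N q)%:E < e%:E)%E.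
Proof.
move=> e0.
set S := (\esum_(q in T) (D q)%:E)%E.
have S0 : (0 <= S)%E by apply: esum_ge0 => q hq; rewrite lee_fin; exact: ltW (Dpos hq).
have Sfin : S \is a fin_num by rewrite ge0_fin_numE.
have : ((fine S - e)%:E < S)%E by rewrite -{2}(fineK Sfin) lte_fin gtrBl.
rewrite {2}/S /esum => /ereal_sup_gt [_ [F [fF FT] <-]] hF.
have [M hM] := fin_bound lev fF.
exists M.+1.
have hsplit := esumID [set q | (M.+1 <= lev q)%N] T (fun q => (D q)%:E) D0E.
rewrite -/S in hsplit.
have e1 : (\esum_(i in T `&` [set q | (M.+1 <= lev q)%N]) (D i)%:E =
           \esum_(q in T) (dtail M.+1 q)%:E)%E.
  rewrite esum_mkcondr; apply: eq_esum => q _; rewrite /dtail.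
  have -> : (q \in [set q | (M.+1 <= lev q)%N]) = (M.+1 <= lev q)%N.
    by apply/idP/idP => [/set_mem|/mem_set].
  by case: ifP.
rewrite e1 in hsplit.
set a := (\esum_(q in T) (dtail M.+1 q)%:E)%E in hsplit *.
set b := (\esum_(i in T `&` ~` [set q | (M.+1 <= lev q)%N]) (D i)%:E)%E in hsplit.
have hb : (\sum_(x \in F) (D x)%:E <= b)%E.
  apply: esum_ge; exists F => //; split => // q Fq; split; first exact: FT.
  by apply/negP; rewrite -leqNgt hM.
have a0 : (0 <= a)%E by apply: esum_ge0 => q hq; rewrite lee_fin dtail_ge0.
have b0 : (0 <= b)%E by apply: esum_ge0 => q [hq _]; rewrite lee_fin; exact: ltW (Dpos hq).
have afin : a \is a fin_num.
  rewrite ge0_fin_numE //; apply: le_lt_trans (_ : S < +oo)%E => //.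
  by rewrite hsplit; apply: leeDl.
have bfin : b \is a fin_num.
  rewrite ge0_fin_numE //; apply: le_lt_trans (_ : S < +oo)%E => //.
  by rewrite hsplit; apply: leeDr.
have e2 : fine S = fine a + fine b.
  by apply: EFin_inj; rewrite EFinD !fineK.
have e3 : fine S - e < fine b.
  by rewrite -lte_fin fineK //; exact: (lt_le_trans hF hb).
change (a < e%:E)%E; rewrite -(fineK afin) lte_fin; lra.
Qed.

Definition EV (P : nat -> Prop) := exists N, forall n, (N <= n)%N -> P n.

Lemma EVE (P : nat -> Prop) : (\forall n \near \oo, P n) <-> EV P.
Proof.
split.
  by move=> [N _ hN]; exists N => n hn; apply: hN.
by move=> [N hN]; exists N => // n hn; apply: hN.
Qed.

Lemma EV_and (P Q : nat -> Prop) : EV P -> EV Q -> EV (fun n => P n /\ Q n).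
Proof.
move=> [N hN] [M hM]; exists (maxn N M) => n hn; split.
  by apply: hN; apply: leq_trans hn; exact: leq_maxl.
by apply: hM; apply: leq_trans hn; exact: leq_maxr.
Qed.

Lemma EV_mono (P Q : nat -> Prop) : (forall n, P n -> Q n) -> EV P -> EV Q.
Proof. by move=> h [N hN]; exists N => n hn; apply: h; apply: hN. Qed.

Lemma cvgE (u : nat -> R) l :
  (u @ \oo --> l) <-> (forall e, 0 < e -> EV (fun n => `|l - u n| < e)).
Proof.
split => h.
  by move=> e e0; apply/EVE; exact: ((cvgrPdist_lt _ _).1 h e e0).
by apply/cvgrPdist_lt => e e0; apply/EVE; exact: h.
Qed.

Lemma cvg_ev_cst (u : nat -> R) l : EV (fun n => u n = l) -> u @ \oo --> l.
Proof.
move=> h; apply/cvgE => e e0; apply: EV_mono h => n ->.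
by rewrite subrr normr0.
Qed.

Lemma lim_ev_cst (u : nat -> R) l : EV (fun n => u n = l) -> lim (u @ \oo) = l.
Proof. by move=> h; apply: cvg_lim => //; exact: cvg_ev_cst. Qed.

Lemma cauchy_cvgR (u : nat -> R) :
  (forall e, 0 < e -> exists N, forall m n, (N <= m)%N -> (N <= n)%N -> `|u m - u n| < e) ->
  cvg (u @ \oo).
Proof.
move=> h; apply/cauchy_cvgP; apply/cauchyP => e e0.
have [N hN] := h e e0; exists (u N).
apply/EVE; exists N => n hn /=.
by rewrite /ball /= hN.
Qed.

Lemma bequivE y z :
  bequiv r m0 x0 D y z <-> (forall e, 0 < e -> EV (fun n => rho (y n) (z n) < e)).
Proof.
rewrite /bequiv cvgE; split => h e e0; apply: EV_mono (h e e0) => n;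
  by rewrite sub0r normrN ger0_norm // rho_ge0.
Qed.

Lemma bequiv_refl y : bequiv r m0 x0 D y y.
Proof. by apply/bequivE => e e0; exists 0%N => n _; rewrite rho_xx. Qed.

Lemma bequiv_sym y z : bequiv r m0 x0 D y z -> bequiv r m0 x0 D z y.
Proof. by move/bequivE => h; apply/bequivE => e e0; apply: EV_mono (h e e0) => n; rewrite rho_sym. Qed.

Lemma bequiv_trans y z u : (forall n, T (y n)) -> (forall n, T (z n)) -> (forall n, T (u n)) ->
  bequiv r m0 x0 D y z -> bequiv r m0 x0 D z u -> bequiv r m0 x0 D y u.
Proof.
move=> ty tz tu /bequivE h1 /bequivE h2; apply/bequivE => e e0.
have e2 : 0 < e / 2 by rewrite divr_gt0.
apply: EV_mono (EV_and (h1 _ e2) (h2 _ e2)) => n [a b].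
apply: le_lt_trans (rho_tri (ty n) (tz n) (tu n)) _.
by rewrite (splitr e) ltrD.
Qed.

Lemma rho_path w w' n m m' : Om w -> Om w' -> w n = w' n -> (n <= m)%N -> (n <= m')%N ->
  ((rho (w m) (w' m'))%:E <= \esum_(q in T) (dtail n q)%:E)%E.
Proof.
move=> hw hw' hn hm hm'.
apply: rho_le_esum; [exact: (path_tree m hw).1|exact: (path_tree m' hw').1|].
move=> q hq; rewrite /dtail; case: ifP => hl.
  by apply: term_le => //; [exact: (path_tree m hw).1|exact: (path_tree m' hw').1].
have hlt : (lev q < n)%N by rewrite ltnNge hl.
have ew : w (lev q) = w' (lev q).
  by rewrite (path_low hw (ltnW hlt)) (path_low hw' (ltnW hlt)) hn.
have k1 : kron q (w m) = 0.
  rewrite /kron; case: eqP => // e; move: hlt; rewrite e (path_tree m hw).2.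
  by rewrite ltnNge hm.
have k2 : kron q (w' m') = 0.
  rewrite /kron; case: eqP => // e; move: hlt; rewrite e (path_tree m' hw').2.
  by rewrite ltnNge hm'.
rewrite /term (path_K m hw hq) (path_K m' hw' hq) ew k1 k2.
rewrite (leq_trans (ltnW hlt) hm) (leq_trans (ltnW hlt) hm').
by rewrite !subrr normr0 addr0 mulr0 mul0r.
Qed.

Lemma sep_paths w w' k m : Om w -> Om w' -> w k <> w' k -> (k <= m)%N ->
  eps (w k) <= rho (w m) (w' m).
Proof.
move=> hw hw' hk hm; have [tk lk] := path_tree k hw.
apply: rho_sep => //; [exact: (path_tree m hw).1|exact: (path_tree m hw').1|].
rewrite (path_K m hw tk) (path_K m hw' tk) lk hm eqxx /=.
have -> : (w k == w' k) = false by apply/eqP.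
exact: lt0r_neq0 (C_gt0 tk).
Qed.

Lemma path_bdry w : Om w -> bdry_seq r m0 x0 D w.
Proof.
move=> hw; split.
- by move=> n; exact: (path_tree n hw).1.
- move=> e e0; have [N hN] := tail_small e0; exists N => m n hm hn.
  rewrite -lte_fin; apply: le_lt_trans hN.
  exact: rho_path.
- move=> F fF; have [M hM] := fin_bound lev fF; exists M.+1 => n hn Fn.
  by move: (hM _ Fn); rewrite (path_tree n hw).2 leqNgt hn.
- move=> x hx; case: (boolP (x == w (lev x))) => hxw.
    exists (C x); apply: cvg_ev_cst; exists (lev x) => n hn.
    by rewrite (path_K n hw hx) hn hxw.
  exists 0; apply: cvg_ev_cst; exists 0%N => n _.
  by rewrite (path_K n hw hx) (negPf hxw) andbF.
Qed.

Local Notation bdry := (bdry_seq r m0 x0 D).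
Local Notation bcl := (bclass r m0 x0 D).
Local Notation Ph := (Phi r m0 x0 D).

Lemma bclass_self y : bdry y -> bcl y y.
Proof. by move=> hy; split => //; exact: bequiv_refl. Qed.

Lemma rep_in y : bdry y -> bcl y (rep x0 (bcl y)).
Proof. by move=> hy; apply: xgetI; exact: bclass_self. Qed.

Lemma rho_quad a b c d : T a -> T b -> T c -> T d ->
  `|rho a b - rho c d| <= rho a c + rho b d.
Proof.
move=> ta tb tc td.
have h1 := rho_tri ta tc tb; have h2 := rho_tri tc td tb.
have h3 := rho_tri tc ta td; have h4 := rho_tri ta tb td.
rewrite (rho_sym d b) in h2; rewrite (rho_sym c a) in h3.
rewrite ler_norml; apply/andP; split; lra.
Qed.

Lemma rho_seq_cvg a b : bdry a -> bdry b -> cvg ((fun n => rho (a n) (b n)) @ \oo).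
Proof.
move=> [ta ca _ _] [tb cb _ _]; apply: cauchy_cvgR => e e0.
have e2 : 0 < e / 2 by rewrite divr_gt0.
have [N1 h1] := ca _ e2; have [N2 h2] := cb _ e2.
exists (maxn N1 N2) => m n hm hn.
have hm1 : (N1 <= m)%N by apply: leq_trans hm; exact: leq_maxl.
have hm2 : (N2 <= m)%N by apply: leq_trans hm; exact: leq_maxr.
have hn1 : (N1 <= n)%N by apply: leq_trans hn; exact: leq_maxl.
have hn2 : (N2 <= n)%N by apply: leq_trans hn; exact: leq_maxr.
have := rho_quad (ta m) (tb m) (ta n) (tb n).
have := h1 m n hm1 hn1; have := h2 m n hm2 hn2; lra.
Qed.

Lemma bdistE y y' : bdry y -> bdry y' ->
  bdist r m0 x0 D (bcl y) (bcl y') = lim ((fun n => rho (y n) (y' n)) @ \oo).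
Proof.
move=> hy hy'; have hv := rho_seq_cvg hy hy'.
set l := lim _ in hv *.
have [ba /bequivE ea] := rep_in hy; have [bb /bequivE eb] := rep_in hy'.
set a := rep x0 (bcl y) in ba ea *; set b := rep x0 (bcl y') in bb eb *.
rewrite /bdist -/a -/b; apply: cvg_lim => //.
apply/cvgE => e e0.
have e3 : 0 < e / 3 by rewrite divr_gt0.
move/cvgE: hv => hv.
apply: EV_mono (EV_and (hv _ e3) (EV_and (ea _ e3) (eb _ e3))) => n [h1 [h2 h3]].
have [ty _ _ _] := hy; have [ty' _ _ _] := hy'; have [ta _ _ _] := ba; have [tb _ _ _] := bb.
have h4 := rho_quad (ty n) (ty' n) (ta n) (tb n).
have h5 := ler_distD (rho (y n) (y' n)) l (rho (a n) (b n)).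
have h6 : e = e / 3 + e / 3 + e / 3 by field.
lra.
Qed.

Lemma bdist_ge w w' e : Om w -> Om w' -> EV (fun n => e <= rho (w n) (w' n)) ->
  e <= bdist r m0 x0 D (Ph w) (Ph w').
Proof.
move=> hw hw' h; rewrite /Phi bdistE; try exact: path_bdry.
apply: limr_ge; first exact: rho_seq_cvg (path_bdry hw) (path_bdry hw').
exact/EVE.
Qed.

Lemma bdist_le w w' e : Om w -> Om w' -> EV (fun n => rho (w n) (w' n) <= e) ->
  bdist r m0 x0 D (Ph w) (Ph w') <= e.
Proof.
move=> hw hw' h; rewrite /Phi bdistE; try exact: path_bdry.
apply: limr_le; first exact: rho_seq_cvg (path_bdry hw) (path_bdry hw').
exact/EVE.
Qed.

Lemma Phi_inj w w' : Om w -> Om w' -> Ph w = Ph w' -> w = w'.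
Proof.
move=> hw hw' e.
have : Ph w w' by rewrite e; exact: bclass_self (path_bdry hw').
move=> [_ /bequivE hb]; apply/funext => k; apply: contrapT => hk.
have [tk _] := path_tree k hw.
have [N hN] := hb _ (eps_gt0 tk).
have := hN (maxn N k) (leq_maxl _ _).
by rewrite ltNge (sep_paths hw hw' hk (leq_maxr _ _)).
Qed.

Lemma Kb_formula x w : T x -> Om w ->
  martinKb r m0 x0 x (Ph w) = if x == w (lev x) then C x else 0.
Proof.
move=> hx hw; have bw := path_bdry hw.
have [ba /bequivE ea] := rep_in bw.
have [ta _ _ _] := ba.
have [N hN] := ea _ (eps_gt0 hx).
rewrite /martinKb /Phi; apply: lim_ev_cst; exists (maxn N (lev x)) => n hn.
have hK : K x (rep x0 (bcl w) n) = K x (w n).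
  apply/eqP; apply: contraT => hne.
  have := hN n (leq_trans (leq_maxl _ _) hn).
  rewrite ltNge (rho_sep hx (path_tree n hw).1 (ta n)) //.
  by rewrite eq_sym.
rewrite hK (path_K n hw hx) (leq_trans (leq_maxr _ _) hn) /=.
by case: ifP.
Qed.

Lemma C_path w n : Om w -> C (w n) = (\prod_(1 <= i < n.+1) W (w i))^-1.
Proof.
move=> hw; rewrite /Ccoef (path_tree n hw).2; congr (_^-1).
rewrite /P -(big_mkord xpredT (fun i => W (iter i r (w n)))) big_add1 /=.
rewrite big_nat_rev /=; apply: eq_big_nat => i /andP[_ hi].
by rewrite add0n (path_low hw hi).
Qed.

Lemma fin_preim k : finite_set (preim_n r x0 k).
Proof.
elim: k => [|k IH].
  apply: (sub_finite_set (B := [set x0])); last exact: finite_set1.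
  by move=> z; rewrite /preim_n /= => ->.
apply: (sub_finite_set (B := \bigcup_(x in preim_n r x0 k) (r @^-1` [set x]))).
  move=> z hz; exists (r z) => //=; by rewrite /preim_n /= -iterSr.
by apply: bigcup_finite => // x _; exact: finpre.
Qed.

Lemma low_fin k : finite_set [set q | T q /\ (lev q < k)%N].
Proof.
elim: k => [|k IH].
  by apply: (sub_finite_set (B := set0)) => // q [].
apply: (sub_finite_set (B := [set q | T q /\ (lev q < k)%N] `|` preim_n r x0 k)).
  move=> q [hq]; rewrite ltnS leq_eqVlt => /orP [/eqP e|h]; last by left.
  by right; rewrite /preim_n /= -e lev_spec.
by rewrite finite_setU; split => //; exact: fin_preim.
Qed.

Lemma anc_unique q q' z : T q -> T q' -> lev q = lev q' -> anc q z -> anc q' z -> q = q'.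
Proof.
move=> hq hq' el [j hj] [j' hj'].
have [_ e1] := anc_lev hj hq; have [_ e2] := anc_lev hj' hq'.
move: e1; rewrite e2 el => /eqP; rewrite eqn_add2l => /eqP ejj.
by rewrite -hj -hj' ejj.
Qed.

Lemma anc_r q z : anc q z -> anc (r q) z.
Proof. by move=> [j hj]; exists j.+1; rewrite iterS hj. Qed.

Section Surj.
Variable y : nat -> X.
Hypothesis hy : bdry y.

Lemma ty n : T (y n).
Proof. by case: hy. Qed.

Lemma stab q : T q -> exists N, forall m n, (N <= m)%N -> (N <= n)%N -> K q (y m) = K q (y n).
Proof.
move=> hq; have [_ cy _ _] := hy; have [N hN] := cy _ (eps_gt0 hq).
exists N => m n hm hn; apply/eqP; apply: contraT => hne.
have := hN m n hm hn; by rewrite ltNge (rho_sep hq (ty m) (ty n) hne).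
Qed.

Lemma lev_big k : EV (fun n => (k <= lev (y n))%N).
Proof.
have [_ _ ly _] := hy; have [N hN] := ly _ (low_fin k).
exists N => n hn; rewrite leqNgt; apply/negP => hl; apply: (hN n hn); split => //; exact: ty.
Qed.

Lemma exists_anc k : exists q, T q /\ lev q = k /\ EV (fun n => anc q (y n)).
Proof.
pose f q := xget 0%N [set N | forall m n, (N <= m)%N -> (N <= n)%N -> K q (y m) = K q (y n)].
have hf q : T q -> forall m n, (f q <= m)%N -> (f q <= n)%N -> K q (y m) = K q (y n).
  move=> hq; have [N hN] := stab hq.
  exact: (@xgetI _ 0%N [set N | forall m n, (N <= m)%N -> (N <= n)%N -> K q (y m) = K q (y n)] N hN).
have [N0 hN0] := fin_bound f (fin_preim k).
have [N1 hN1] := lev_big k.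
set N := maxn N0 N1.
have hk : (k <= lev (y N))%N by apply: hN1; exact: leq_maxr.
have [tq lq] := iter_tree (ty N) (leq_subr k (lev (y N))).
rewrite subKn // in lq.
exists (iter (lev (y N) - k) r (y N)); split => //; split => //.
set q := iter _ r (y N) in tq lq *.
have Lq : preim_n r x0 k q by rewrite /preim_n /= -lq lev_spec.
have hfq : (f q <= N)%N by apply: leq_trans (hN0 _ Lq) _; exact: leq_maxl.
exists N => n hn; apply: contrapT => na.
have := hf q tq n N (leq_trans hfq hn) hfq.
rewrite (KE0 tq na) (KE1 tq (ty N)); last by exists (lev (y N) - k)%N.
by move=> e; move: (C_gt0 tq); rewrite -e ltxx.
Qed.

Definition wy k := xget x0 [set q | T q /\ lev q = k /\ EV (fun n => anc q (y n))].

Lemma wy_spec k : T (wy k) /\ lev (wy k) = k /\ EV (fun n => anc (wy k) (y n)).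
Proof. exact: (@xgetPex _ x0 [set q | T q /\ lev q = k /\ EV (fun n => anc q (y n))] (exists_anc k)). Qed.

Lemma wy_eq k q : T q -> lev q = k -> EV (fun n => anc q (y n)) -> wy k = q.
Proof.
move=> hq lq eq; have [tw [lw ew]] := wy_spec k.
have [n hn] := EV_and ew eq.
have [h1 h2] := hn n (leqnn n).
apply: anc_unique tw hq _ h1 h2; by rewrite lw lq.
Qed.

Lemma wy_Om : Om wy.
Proof.
split.
  apply: (wy_eq (treeI (n:=0%N) erefl) (lev_eq (n:=0%N) erefl)).
  by exists 0%N => n _; exists (lev (y n)); exact: lev_spec (ty n).
move=> k; have [tw [lw ew]] := wy_spec k.+1.
have h1 : (1 <= lev (wy k.+1))%N by rewrite lw.
have [t1 l1] := iter_tree tw h1.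
rewrite lw subn1 /= in l1.
apply: esym; apply: wy_eq; [exact: t1|exact: l1|].
by apply: EV_mono ew => n; exact: anc_r.
Qed.

Lemma bequiv_wy : bequiv r m0 x0 D y wy.
Proof.
apply/bequivE => e e0; have [N hN] := tail_small e0.
have [tN [lN [N1 hN1]]] := wy_spec N.
exists (maxn N N1) => n hn.
have hnN : (N <= n)%N by apply: leq_trans hn; exact: leq_maxl.
have [j hj] := hN1 n (leq_trans (leq_maxr _ _) hn).
have [_ ly] := anc_lev hj tN.
rewrite -lte_fin; apply: le_lt_trans hN.
apply: rho_le_esum; [exact: ty|exact: (path_tree n wy_Om).1|].
move=> q hq; rewrite /dtail; case: ifP => hl.
  by apply: term_le => //; [exact: ty|exact: (path_tree n wy_Om).1].
have hlt : (lev q < N)%N by rewrite ltnNge hl.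
have hanc : anc (wy (lev q)) (y n).
  exists ((N - lev q) + j)%N; rewrite iterD hj.
  by rewrite -(path_low wy_Om (ltnW hlt)).
have hKe : K q (y n) = K q (wy n).
  rewrite (path_K n wy_Om hq) (leq_trans (ltnW hlt) hnN) /=.
  case: ifP => [/eqP eq|/negP ne].
    by apply: KE1 => //; [exact: ty|rewrite eq].
  apply: KE0 => // aq; apply: ne; apply/eqP.
  apply: anc_unique hq _ _ aq hanc; first exact: (path_tree _ wy_Om).1.
  by rewrite (path_tree _ wy_Om).2.
have k1 : kron q (y n) = 0.
  rewrite /kron; case: eqP => // eq; move: hlt; rewrite eq ly lN ltnNge.
  by rewrite leq_addr.
have k2 : kron q (wy n) = 0.
  rewrite /kron; case: eqP => // eq; move: hlt; rewrite eq (path_tree n wy_Om).2.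
  by rewrite ltnNge hnN.
by rewrite /term hKe k1 k2 !subrr normr0 addr0 mulr0 mul0r.
Qed.

End Surj.

Lemma Phi_surj c : boundary r m0 x0 D c -> exists w, Om w /\ Ph w = c.
Proof.
move=> [y [hy ->]]; exists (wy y); split; first exact: wy_Om.
have hb := bequiv_wy hy.
have twy n := (path_tree n (wy_Om hy)).1.
have tyy := ty hy.
apply/seteqP; split => z [bz hz]; have tz : forall n, T (z n) by case: bz.
  by split => //; exact: (bequiv_trans tyy twy tz hb hz).
by split => //; exact: (bequiv_trans twy tyy tz (bequiv_sym hb) hz).
Qed.

Lemma homeo U : U `<=` Om ->
  (Omega_open r x0 U <-> boundary_open r m0 x0 D (Ph @` U)).
Proof.
move=> UO; split.
- move=> [_ hU]; split.
    by move=> c [w Uw <-]; exists w; split => //; exact: path_bdry (UO _ Uw).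
  move=> c [w Uw <-]; have hw := UO _ Uw.
  have [s [n [[_ hs] sub]]] := hU w Uw.
  have [tn _] := path_tree n hw.
  have e0 := eps_gt0 tn.
  exists (eps (w n) / 2); split; first by rewrite divr_gt0.
  move=> c' bc' hd; have [w' [hw' ec']] := Phi_surj bc'.
  rewrite -ec' in hd *; exists w' => //; apply: sub; split => //.
  have wn : w' n = w n.
    apply: contrapT => hne.
    have := @bdist_ge w w' (eps (w n)) hw hw'.
    have : EV (fun m => eps (w n) <= rho (w m) (w' m)).
      by exists n => m hm; apply: sep_paths => // e; apply: hne.
    move=> /[swap] /[apply] h; lra.
  move=> k hk; by rewrite (path_low hw' hk) wn -(path_low hw hk) hs.
- move=> [_ hB]; split => // w Uw; have hw := UO _ Uw.
  have [e [e0 he]] := hB (Ph w) (ex_intro2 _ _ w Uw erefl).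
  have e2 : 0 < e / 2 by rewrite divr_gt0.
  have [N hN] := tail_small e2.
  exists w, N; split; first by split.
  move=> w' [hw' hag].
  have bnd : boundary r m0 x0 D (Ph w') by exists w'; split => //; exact: path_bdry.
  have hd : bdist r m0 x0 D (Ph w) (Ph w') < e.
    apply: le_lt_trans (_ : e / 2 < e); last by rewrite ltr_pdivrMr // ltr_pMr // ltr1n.
    apply: bdist_le => //; exists N => m hm.
    rewrite -lee_fin; apply: ltW; apply: le_lt_trans hN.
    by apply: rho_path => //; rewrite hag.
  have [u Uu eu] := he _ bnd hd.
  by rewrite -(Phi_inj (UO _ Uu) hw' eu).
Qed.

Lemma main_result :
  [/\ (forall w, Omega r x0 w -> bdry_seq r m0 x0 D w),
      set_bij (Omega r x0) (boundary r m0 x0 D) (@Phi R X r m0 x0 D),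
      (forall U, U `<=` Omega r x0 ->
         (Omega_open r x0 U <->
          boundary_open r m0 x0 D (@Phi R X r m0 x0 D @` U))) &
      (forall (x : X) (w : nat -> X), tree r x0 x -> Omega r x0 w ->
         (forall n : nat, x = w n ->
            martinKb r m0 x0 x (Phi r m0 x0 D w)
              = (\prod_(1 <= i < n.+1) Defs.W r m0 (w i))^-1) /\
         ((forall n : nat, x <> w n) ->
            martinKb r m0 x0 x (Phi r m0 x0 D w) = 0))].
Proof.
split.
- exact: path_bdry.
- split.
  + by move=> w hw; exists w; split => //; exact: path_bdry.
  + by move=> w w' /set_mem hw /set_mem hw' e; exact: Phi_inj.
  + by move=> c /Phi_surj [w [hw e]]; exists w.
- exact: homeo.
- move=> x w hx hw; split.
    move=> n exn; rewrite Kb_formula // exn (path_tree n hw).2 eqxx.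
    exact: C_path.
  move=> h; rewrite Kb_formula //; case: eqP => // e.
  by exfalso; apply: (h (lev x)).
Qed.

End Main.

Theorem theorem4p4 (R : realType) (X : metricType R)
  (r : X -> X) (m0 : X -> R[i]) (x0 : X) (D : X -> R) :
  compact [set: X] ->
  (* r finite-to-one, onto, Borel *)
  (forall x : X, finite_set (r @^-1` [set x])) ->
  (forall x : X, exists y : X, r y = x) ->
  borel_fun r ->
  (* m0 Borel (i.e. its real and imaginary parts are Borel) *)
  borel_fun (fun x => complex.Re (m0 x)) ->
  borel_fun (fun x => complex.Im (m0 x)) ->
  (* normalization of m0 *)
  (forall x : X, (npre r x)%:R^-1 *
      (\sum_(y \in r @^-1` [set x]) sqnorm (m0 y)) = 1) ->
  (* x0 regular *)
  regular r m0 x0 ->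
  (* D : T(x0) -> (0, oo) summable *)
  (forall q, tree r x0 q -> 0 < D q) ->
  (\esum_(q in tree r x0) (D q)%:E < +oo)%E ->
  [/\ (* Phi is well defined *)
      (forall w, Omega r x0 w -> bdry_seq r m0 x0 D w),
      (* Phi is a bijection from Omega onto the Martin boundary *)
      set_bij (Omega r x0) (boundary r m0 x0 D) (@Phi R X r m0 x0 D),
      (* Phi is a homeomorphism *)
      (forall U, U `<=` Omega r x0 ->
         (Omega_open r x0 U <->
          boundary_open r m0 x0 D (@Phi R X r m0 x0 D @` U))) &
      (* formula for the Martin kernel on the boundary *)
      (forall (x : X) (w : nat -> X), tree r x0 x -> Omega r x0 w ->
         (forall n : nat, x = w n ->
            martinKb r m0 x0 x (Phi r m0 x0 D w)
              = (\prod_(1 <= i < n.+1) W r m0 (w i))^-1) /\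
         ((forall n : nat, x <> w n) ->
            martinKb r m0 x0 x (Phi r m0 x0 D w) = 0))].
Proof.
move=> _ hfin _ _ _ _ _ hreg hD hDs.
exact: main_result.
Qed.
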